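(* Let $T$ be any $3 \times 9$ matrix with entries in the ring $\mathbb{Z}_{2^{64}}$. Then there exist three distinct columns of $T$ such that the $3 \times 3$ submatrix formed by these columns has even determinant (that is, its determinant is divisible by $2$ in $\mathbb{Z}_{2^{64}}$), and consequently this $3\times 3$ submatrix, viewed as a map $\mathbb{Z}_{2^{64}}^3 \to \mathbb{Z}_{2^{64}}^3$, has a non-trivial kernel.
   Context: $\mathbb{Z}_{2^{64}}$ denotes the ring of integers modulo $2^{64}$. Parity of an element of $\mathbb{Z}_{2^{64}}$ is well defined since $2$ divides $2^{64}$. *)

(* Defs.v *)
From mathcomp Require Import all_boot all_order all_algebra.
Set Implicit Arguments. Unset Strict Implicit. Unset Printing Implicit Defensive.
Import GRing.Theory.

(* The ring Z_{2^64}.  Since 2^64 > 1, 'Z_(2^64) is exactly Z/(2^64)Z. *)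
Definition modulus : nat := (2 ^ 64)%N.
Notation Z64 := 'Z_modulus.

(* Parity of an element of Z_{2^64}: x is even iff its canonical
   representative in [0, 2^64) is even (well defined since 2 | 2^64). *)
Definition Z64_even (x : Z64) : bool := (2 %| (x : nat))%N.

(* Main.v *)
Require Import Defs.
From mathcomp Require Import all_boot all_order all_algebra.
Local Open Scope ring_scope.
Import GRing.Theory.

Lemma mod_gt1 : (1 < modulus)%N.
Proof.
have H : (2 ^ 0 < 2 ^ 64)%N by rewrite ltn_exp2l.
by rewrite expn0 in H.
Qed.

Lemma mod_dvd2 : (2 %| modulus)%N.
Proof. by rewrite /modulus (dvdn_exp2l 2 (isT : (1 <= 64)%N)). Qed.

Lemma even_2mul (y : Z64) : Z64_even (2 * y).
Proof.
rewrite /Z64_even -[y]natr_Zp -natrM val_Zp_nat ?mod_gt1 //.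
have E := modn_dvdm (2 * y) mod_dvd2.
rewrite /dvdn E.
exact: (dvdn_mulr _ (dvdnn 2)).
Qed.

Lemma det_half (R : comRingType) (M : 'M[R]_3) (w : 'I_3 -> R) :
  (forall r, M r 0 = M r 1 + 2 * w r) -> exists y, \det M = 2 * y.
Proof.
move=> H.
pose B : 'M[R]_3 := \matrix_(a, b) if a == 0 then M b 1 else M b a.
pose C : 'M[R]_3 := \matrix_(a, b) if a == 0 then w b else M b a.
exists (\det C).
rewrite -det_tr (determinant_multilinear (B := B) (C := C) (i0 := 0) (b := 1) (c := 2)).
- rewrite (determinant_alternate (i1 := 0) (i2 := 1)) //.
    by rewrite mul1r add0r.
  by move=> b; rewrite !mxE.
- by apply/rowP => b; rewrite !mxE /= H mul1r.
- by apply/matrixP => a b; rewrite !mxE.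
- by apply/matrixP => a b; rewrite !mxE.
Qed.

Lemma diff2 (a b : Z64) : odd a = odd b -> exists w : Z64, a = b + 2 * w.
Proof.
wlog le_ba : a b / (b <= a)%N.
  move=> Hw Hab; case: (leqP b a) => h; first exact: Hw.
  have [w Hw'] := Hw b a (ltnW h) (esym Hab).
  exists (- w); rewrite Hw' mulrN addrK //.
move=> Hab.
have Hod : ~~ odd (a - b)%N by rewrite oddB // Hab addbb.
set q := (((a - b)%N)./2).
exists q%:R.
rewrite -[a in LHS]natr_Zp -[b in RHS]natr_Zp -natrM -natrD.
congr (_%:R).
have := odd_double_half (a - b)%N; rewrite (negbTE Hod) add0n -muln2 => E.
by rewrite mulnC E subnKC.
Qed.

Lemma pigeon (T : 'M[Z64]_(3, 9)) :
  exists i j : 'I_9, i != j /\ forall r, odd (T r i) = odd (T r j).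
Proof.
pose g (c : 'I_9) := (odd (T 0 c), odd (T 1 c), odd (T 2 c)).
have : ~~ injectiveb g.
  apply/negP => /injectiveP Hi.
  have := @leq_card _ _ g Hi.
  by rewrite !card_prod !card_bool card_ord.
case/injectivePn => i [j Hij Hg].
exists i, j; split => // r.
rewrite /g in Hg; case: Hg => H0 H1 H2.
have : (r : nat) \in [:: 0%N; 1%N; 2%N] by case: r => [[|[|[|m]]] hm].
rewrite !inE => /or3P [] /eqP E.
- by have -> : r = 0 by apply/val_inj.
- by have -> : r = 1 by apply/val_inj.
- by have -> : r = 2 by apply/val_inj.
Qed.

Lemma third (i j : 'I_9) : exists k : 'I_9, k != i /\ k != j.
Proof.
have [k /and3P [hk1 hk2 hk3]] : exists k : nat, [&& (k < 9)%N, k != i & k != j].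
  case: i j => [i hi] [j hj] /=.
  case: i hi => [|[|i]] hi; case: j hj => [|[|j]] hj;
    first [ by exists 0%N | by exists 1%N | by exists 2%N ].
by exists (Ordinal hk1); rewrite -!val_eqE /= hk2 hk3.
Qed.

Lemma two64 : (2 : Z64) ^+ 64 = 0.
Proof.
have E : (2 ^ 64)%N = modulus := erefl.
rewrite -natrX E. exact: (pchar_Zp mod_gt1).
Qed.

Lemma lt63 : (2 ^ 63 < modulus)%N.
Proof. by rewrite /modulus ltn_exp2l. Qed.

Lemma gt63 : (2 ^ 0 < 2 ^ 63)%N.
Proof. by rewrite ltn_exp2l. Qed.

Lemma two63 : (2 : Z64) ^+ 63 != 0.
Proof.
rewrite -natrX.
apply/negP => /eqP E0.
have E := congr1 (@nat_of_ord _) E0.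
rewrite (val_Zp_nat mod_gt1) (modn_small lt63) in E. have := gt63. by rewrite E expn0.
Qed.

Theorem mainTheorem1 (T : 'M[Z64]_(3, 9)) :
  exists f : 'I_3 -> 'I_9,
    injective f /\
    Z64_even (\det (colsub f T)) /\
    (exists v : 'cV[Z64]_3, v != 0 /\ colsub f T *m v = 0).
Proof.
have [i [j [Hij Hp]]] := pigeon T.
have [k [Hki Hkj]] := third i j.
have [w Hw] := fin_all_exists (fun r : 'I_3 => @diff2 _ _ (Hp r)).
pose f (x : 'I_3) := if val x == 0%N then i else if val x == 1%N then j else k.
exists f; split.
  move=> a b; rewrite /f.
  case: a => [[|[|[|a]]] ha] //; case: b => [[|[|[|b]]] hb] //= E;
    first [by apply: val_inj | subst; by rewrite ?eqxx in Hij Hki Hkj].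
split.
  have Hd : forall r, colsub f T r 0 = colsub f T r 1 + 2 * w r.
    by move=> r; rewrite !mxE /f /= Hw.
  have [y ->] := @det_half _ (colsub f T) w Hd.
  exact: even_2mul.
have [h [Hh0 Hh2]] : exists h : Z64, h != 0 /\ 2 * h = 0.
  exists (2 ^+ 63); split; first exact: two63.
  by rewrite -exprS two64.
exists (\col_r (if r == 0 then h else if r == 1 then - h else 0)).
split.
  apply/negP => /eqP /matrixP /(_ 0 0); rewrite !mxE /= => E.
  by move: Hh0; rewrite E eqxx.
apply/matrixP => r c; rewrite !mxE.
rewrite !big_ord_recl big_ord0 !mxE /=.
rewrite /f /= Hw mulr0 !addr0 mulrN mulrDl addrAC subrr add0r.
by rewrite mulrAC Hh2 mul0r.
Qed.
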